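(* Let $p$ be a prime and $n\geq 2$. If $B$ is a minimal blocking set with respect to lines in $PG(n,p)$ such that every line meets $B$ in a number of points congruent to $1\pmod p$, then $B$ is a hyperplane.
   Context: A blocking set with respect to lines is a point set meeting every line. It is minimal if no proper subset is a blocking set. *)

(* Defs.v *)
(* PG(n,p) modelled as the lattice of subspaces of 'F_p^(n+1),
   a subspace being represented canonically by a square matrix A with <<A>> = A. *)
From HB Require Import structures.
From mathcomp Require Import all_boot all_order all_algebra.
Set Implicit Arguments. Unset Strict Implicit. Unset Printing Implicit Defensive.
Import GRing.Theory.

(* A projective subspace of PG(n,p) of projective dimension d is a vector
   subspace of 'F_p^(n+1) of rank d+1, represented canonically. *)
Definition psub_pred (p n d : nat) (A : 'M['F_p]_(n.+1)) : bool :=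
  (<<A>>%MS == A) && (\rank A == d.+1).

Definition ppoint (p n : nat) := {A : 'M['F_p]_(n.+1) | psub_pred 0 A}.
Definition pline (p n : nat) := {A : 'M['F_p]_(n.+1) | psub_pred 1 A}.

Definition points_on (p n : nat) (S : 'M['F_p]_(n.+1)) : {set ppoint p n} :=
  [set x : ppoint p n | (val x <= S)%MS].

Definition blocking_set (p n : nat) (B : {set ppoint p n}) : Prop :=
  forall L : pline p n, exists x, x \in B :&: points_on (val L).

Definition minimal_blocking_set (p n : nat) (B : {set ppoint p n}) : Prop :=
  blocking_set B /\ (forall B' : {set ppoint p n}, B' \proper B -> ~ blocking_set B').

Definition is_hyperplane (p n : nat) (B : {set ppoint p n}) : Prop :=
  exists H : 'M['F_p]_(n.+1), (<<H>>%MS == H) /\ \rank H = n /\ B = points_on H.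

(* Main.v *)
Require Import Defs.
From HB Require Import structures.
From mathcomp Require Import all_boot all_order all_algebra zify.
Set Implicit Arguments. Unset Strict Implicit. Unset Printing Implicit Defensive.
Import GRing.Theory.

Section Aux.
Variables (p n : nat).
Local Notation F := 'F_p.
Local Notation pt := (ppoint p n).

Lemma ptP (x : pt) : <<val x>>%MS = val x /\ \rank (val x) = 1%N.
Proof. by case: x => A /= /andP[/eqP -> /eqP ->]. Qed.

Lemma pt_le (x y : pt) : (val x <= val y)%MS -> x = y.
Proof.
move=> le; apply: val_inj.
have := (mxrank_leqif_eq le).2; rewrite (proj2 (ptP x)) (proj2 (ptP y)) eqxx.
move=> /esym h.
rewrite -(proj1 (ptP x)) -(proj1 (ptP y)); apply: eq_genmx.
by apply/eqmxP.
Qed.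

Lemma exists_row m1 m2 (S : 'M[F]_(m1, n.+1)) (T : 'M[F]_(m2, n.+1)) :
  \rank T < \rank S -> exists w : 'rV[F]_n.+1, (w <= S)%MS && ~~ (w <= T)%MS.
Proof.
move=> lt; case: (boolP [exists w : 'rV[F]_n.+1, (w <= S)%MS && ~~ (w <= T)%MS]) => [/existsP //|/existsPn H].
have : (S <= T)%MS.
  apply/row_subP => i; have := H (row i S); rewrite row_sub /=.
  by rewrite negbK.
by move/mxrankS; rewrite leqNgt lt.
Qed.

Lemma mkpt_proof (w : 'rV[F]_n.+1) : w != 0%R -> psub_pred 0 <<w>>%MS.
Proof. by move=> nz; rewrite /psub_pred genmx_id eqxx /= genmxE rank_rV nz. Qed.

Definition mkpt (d : pt) (w : 'rV[F]_n.+1) : pt := insubd d <<w>>%MS.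

Lemma val_mkpt d w : w != 0%R -> val (mkpt d w) = <<w>>%MS.
Proof. by move=> nz; rewrite /mkpt insubdK //; apply: mkpt_proof. Qed.

Lemma pt_vec (z : pt) : exists2 w : 'rV[F]_n.+1, w != 0%R & forall d, z = mkpt d w.
Proof.
have [|w /andP[wz]] := @exists_row _ _ (val z) (0%R : 'M[F]_(1, n.+1)).
  by rewrite mxrank0 (proj2 (ptP z)).
move=> nw0; have nz : w != 0%R by apply: contraNneq nw0 => ->; rewrite sub0mx.
exists w => // d; apply: esym; apply: pt_le; rewrite val_mkpt // genmxE //.
Qed.


Lemma rank_add1 m1 m2 (A : 'M[F]_(m1, n.+1)) (B : 'M[F]_(m2, n.+1)) :
  \rank B = 1%N -> ~~ (B <= A)%MS -> \rank (A + B)%MS = (\rank A).+1.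
Proof.
move=> rB nBA; apply/eqP; rewrite eqn_leq; apply/andP; split.
  by have := (mxrank_adds_leqif A B).1; rewrite rB addn1.
apply: rank_ltmx; rewrite ltmxE addsmxSl /= addsmx_sub submx_refl /=.
exact: nBA.
Qed.

Lemma mkpt_eq d (w w' : 'rV[F]_n.+1) : (w :=: w')%MS -> mkpt d w = mkpt d w'.
Proof. by move=> h; rewrite /mkpt (eq_genmx h). Qed.

Local Open Scope ring_scope.
Lemma line_card (L : pline p n) : prime p -> (#|points_on (val L)| <= p.+1)%N.
Proof.
move=> pr.
have [gL rL] : <<val L>>%MS = val L /\ \rank (val L) = 2.
  by case: L => A /= /andP[/eqP -> /eqP ->].
have [|u /andP[uL nu0]] := @exists_row _ _ (val L) (0%R : 'M[F]_(1, n.+1)).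
  by rewrite mxrank0 rL.
have unz : u != 0%R by apply: contraNneq nu0 => ->; rewrite sub0mx.
have [|v /andP[vL nvu]] := @exists_row _ _ (val L) u.
  by rewrite rL rank_rV unz.
have vnz : v != 0%R by apply: contraNneq nvu => ->; rewrite sub0mx.
have ruv : \rank (u + v)%MS = 2 by rewrite rank_add1 ?rank_rV ?unz ?vnz.
have Luv : (val L <= u + v)%MS.
  have uvL : (u + v <= val L)%MS by rewrite addsmx_sub uL vL.
  have := (mxrank_leqif_eq uvL).2; rewrite ruv rL eqxx => /esym /eqmxP ->.
  exact: submx_refl.
pose d : pt := exist _ <<u>>%MS (mkpt_proof unz).
pose f (o : option F) : pt := if o is Some a then mkpt d (u + a *: v)%R else mkpt d v.
apply: (@leq_trans #|[set f o | o in [set: option F]]|%N); last first.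
  by rewrite (leq_trans (leq_imset_card _ _)) // cardsT card_option card_Fp.
apply: subset_leq_card; apply/subsetP => z; rewrite inE => zL.
have [w wnz zw] := pt_vec z; rewrite (zw d).
have : (w <= u + v)%MS.
  apply: submx_trans Luv; apply: submx_trans zL.
  by rewrite (zw d) val_mkpt // genmxE submx_refl.
case/sub_addsmxP => [[c1 c2]] /=.
rewrite [c1]mx11_scalar [c2]mx11_scalar !mul_scalar_mx.
set a := c1 0 0; set b := c2 0 0 => wE.
have [a0|anz] := eqVneq a 0%R.
  apply/imsetP; exists None; rewrite ?inE //=.
  apply: mkpt_eq; rewrite wE a0 scale0r add0r; apply: eqmx_scale.
  by apply: contraNneq wnz => b0; rewrite wE a0 b0 !scale0r addr0.
apply/imsetP; exists (Some (b / a)%R); rewrite ?inE //=.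
apply: mkpt_eq; rewrite wE.
have -> : (a *: u + b *: v = a *: (u + (b / a) *: v))%R.
  by rewrite scalerDr scalerA mulrC divfK.
exact: eqmx_scale.
Qed.

Local Close Scope ring_scope.

Lemma ptM (A : 'M[F]_n.+1) : \rank A = 1%N -> psub_pred 0 <<A>>%MS.
Proof. by move=> r; rewrite /psub_pred genmx_id eqxx /= genmxE r. Qed.

Lemma line_pf (x y : pt) : x != y -> psub_pred 1 <<(val x + val y)%MS>>%MS.
Proof.
move=> nxy; rewrite /psub_pred genmx_id eqxx /= genmxE.
apply/eqP; rewrite rank_add1 ?(proj2 (ptP x)) ?(proj2 (ptP y)) //.
by apply: contra nxy => /pt_le ->.
Qed.

Lemma closure (B : {set pt}) : prime p ->
  (forall L : pline p n, #|B :&: points_on (val L)| = 1 %[mod p]) ->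
  forall x y z : pt, x \in B -> y \in B -> x != y ->
  (val z <= val x + val y)%MS -> z \in B.
Proof.
move=> pr hB x y z xB yB nxy zxy; have p1 := prime_gt1 pr.
pose L : pline p n := exist (fun A => psub_pred 1 A) _ (line_pf nxy).
have hm := hB L.
set S := B :&: points_on (val L) in hm.
have xyS : [set x; y] \subset S.
  apply/subsetP => t; rewrite !inE => /orP[] /eqP ->; rewrite ?xB ?yB /=
    genmxE ?addsmxSl ?addsmxSr //.
have k2 : 2 <= #|S|.
  by have := subset_leq_card xyS; rewrite cards2 nxy.
have kp : p.+1 <= #|S|.
  move: hm k2 p1; move: #|S| => k hm hk hp.
  rewrite (modn_small (m:=1)) // in hm.
  have := divn_eq k p; rewrite hm; case: (k %/ p) => [|q] /=; nia.
have Spt : S \subset points_on (val L) by apply/subsetP => t; rewrite inE => /andP[].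
have hc := line_card L.
have eqS : S = points_on (val L).
  apply/eqP; rewrite -(subset_leqif_cards Spt).2 eqn_leq subset_leq_card //=.
  apply: leq_trans kp; exact: (line_card L pr).
have : z \in S by rewrite eqS inE /= genmxE.
by rewrite inE => /andP[].
Qed.


Lemma span_in (B : {set pt}) : prime p ->
  (forall L : pline p n, #|B :&: points_on (val L)| = 1 %[mod p]) ->
  forall s : seq pt, all (mem B) s ->
  forall z : pt, (val z <= \sum_(x <- s) val x)%MS -> z \in B.
Proof.
move=> pr hB; elim=> [|x s IH] /=.
  move=> _ z; rewrite big_nil submx0 => /eqP z0.
  by move: z z0 => [A /= hA] A0; exfalso; move: hA; rewrite /psub_pred A0 mxrank0 andbF.
case/andP=> xB sB z; rewrite big_cons.
set S := (\sum_(y <- s) val y)%MS => zxS.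
have [zS|nzS] := boolP (val z <= S)%MS; first exact: IH.
have nxS : ~~ (val x <= S)%MS.
  apply: contra nzS => xS; apply: (submx_trans zxS).
  by rewrite addsmx_sub xS submx_refl.
have [zx|nzx] := boolP (val z <= val x)%MS; first by rewrite (pt_le zx).
have nxz : ~~ (val x <= val z)%MS.
  by apply: contra nzx => /pt_le ->; rewrite submx_refl.
pose Y := ((val z + val x) :&: S)%MS.
have rzx : \rank (val z + val x)%MS = 2.
  by rewrite rank_add1 ?(proj2 (ptP x)) ?(proj2 (ptP z)).
have rxS : \rank (S + val x)%MS = (\rank S).+1.
  by rewrite rank_add1 ?(proj2 (ptP x)).
have rY : \rank Y = 1%N.
  have := mxrank_sum_cap (val z + val x)%MS S.
  have -> : \rank ((val z + val x) + S)%MS = (\rank S).+1.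
    rewrite -rxS; apply: eqmx_rank; apply/andP; split.
      rewrite !addsmx_sub addsmxSl addsmxSr !andbT.
      by rewrite addsmxC.
    rewrite addsmx_sub addsmxSr /=.
    exact: (submx_trans (addsmxSr (val z) (val x)) (addsmxSl _ S)).
  rewrite rzx; rewrite -/Y; lia.
pose y : pt := exist (fun A => psub_pred 0 A) _ (ptM rY).
have yS : (val y <= S)%MS by rewrite /= genmxE capmxSr.
have yB : y \in B by apply: IH.
have nxy : x != y by apply: contraNneq nxS => ->.
apply: (closure pr hB xB yB nxy).
have xyzx : (val x + val y <= val z + val x)%MS.
  by rewrite addsmx_sub addsmxSr /= genmxE capmxSl.
have rxy : \rank (val x + val y)%MS = 2.
  rewrite rank_add1 ?(proj2 (ptP x)) ?(proj2 (ptP y)) //.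
  by apply: contra nxy => /pt_le ->.
have := (mxrank_leqif_eq xyzx).2; rewrite rxy rzx eqxx => /esym /eqmxP ->.
exact: addsmxSl.
Qed.


Lemma mem_sum (s : seq pt) (x : pt) : x \in s -> (val x <= \sum_(y <- s) val y)%MS.
Proof.
elim: s => [|a s IH] //=; rewrite inE big_cons => /orP[/eqP ->|xs].
  exact: addsmxSl.
exact: (submx_trans (IH xs) (addsmxSr _ _)).
Qed.

Lemma two_vecs m (C : 'M[F]_(m, n.+1)) : 1 < \rank C ->
  exists u v : 'rV[F]_n.+1, [/\ u != 0%R, (u <= C)%MS, (v <= C)%MS & ~~ (v <= u)%MS].
Proof.
move=> rC.
have [|u /andP[uC nu0]] := @exists_row _ _ C (0%R : 'M[F]_(1, n.+1)).
  by rewrite mxrank0; lia.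
have unz : u != 0%R by apply: contraNneq nu0 => ->; rewrite sub0mx.
have [|v /andP[vC nvu]] := @exists_row _ _ C u.
  by rewrite rank_rV unz.
by exists u, v.
Qed.

Lemma line_in m (C : 'M[F]_(m, n.+1)) : 1 < \rank C ->
  exists L : pline p n, (val L <= C)%MS.
Proof.
move=> /two_vecs [u [v [unz uC vC nvu]]].
have vnz : v != 0%R by apply: contraNneq nvu => ->; rewrite sub0mx.
have pf : psub_pred 1 <<(u + v)%MS>>%MS.
  rewrite /psub_pred genmx_id eqxx /= genmxE; apply/eqP.
  by rewrite rank_add1 ?rank_rV ?unz ?vnz.
exists (exist (fun A => psub_pred 1 A) _ pf) => /=.
by rewrite genmxE addsmx_sub uC vC.
Qed.

Lemma line_two (L : pline p n) : exists x1 x2 : pt,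
  [/\ x1 != x2, x1 \in points_on (val L) & x2 \in points_on (val L)].
Proof.
have rL : \rank (val L) = 2 by case: L => A /= /andP[_ /eqP ->].
have [|u [v [unz uL vL nvu]]] := @two_vecs _ (val L); first by rewrite rL.
have vnz : v != 0%R by apply: contraNneq nvu => ->; rewrite sub0mx.
pose d : pt := exist _ <<u>>%MS (mkpt_proof unz).
exists (mkpt d u), (mkpt d v); split; rewrite ?inE ?val_mkpt ?genmxE //.
apply: contra nvu => /eqP e.
have : (val (mkpt d v) <= val (mkpt d u))%MS by rewrite e submx_refl.
by rewrite !val_mkpt // !genmxE.
Qed.

End Aux.

Unset Implicit Arguments.
Theorem mainTheorem9 (p n : nat) (hp : prime p) (hn : 2 <= n)
  (B : {set ppoint p n}) :
  minimal_blocking_set B ->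
  (forall L : pline p n, #|B :&: points_on (val L)| = 1 %[mod p]) ->
  is_hyperplane B.
Proof.
move=> [blk minB] hB.
pose H := <<(\sum_(x <- enum B) val x)%MS>>%MS.
have memH : forall x, x \in B -> (val x <= H)%MS.
  by move=> x xB; rewrite genmxE; apply: mem_sum; rewrite mem_enum.
have BH : B = points_on H.
  apply/setP => z; rewrite inE; apply/idP/idP; first exact: memH.
  rewrite genmxE; apply: (span_in hp hB).
  by apply/allP => x; rewrite mem_enum.
exists H; split; first by rewrite genmx_id.
split; last exact: BH.
  have rle : \rank H <= n.+1 by exact: rank_leq_col.
  have r1 : ~ \rank H < n.
    move=> rlt.
    have [|L LC] := @line_in _ _ _ (H^C)%MS; first by rewrite mxrank_compl; lia.
    have [x /setIP[xB]] := blk L; rewrite inE => xL.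
    have : (val x <= H :&: H^C)%MS by rewrite sub_capmx memH // (submx_trans xL LC).
    rewrite capmx_compl submx0 => /eqP x0.
    by move: x x0 {xB xL} => [A /= hA] A0; move: hA; rewrite /psub_pred A0 mxrank0 andbF.
  have r2 : \rank H <> n.+1.
    move=> rfull.
    have allB : forall z, z \in B.
      move=> z; rewrite BH inE; apply: submx_full; by rewrite /row_full rfull.
    have [|L _] := @line_in _ _ _ (1%:M : 'M['F_p]_n.+1)%R; first by rewrite mxrank1; lia.
    have [x0 _] := blk L.
    apply: (minB (B :\ x0)); first exact: properD1.
    move=> L'; have [x1 [x2 [n12 x1L x2L]]] := line_two L'.
    have [e1|n1] := eqVneq x1 x0.
      by exists x2; rewrite in_setI in_setD1 allB x2L -e1 eq_sym n12.
    by exists x1; rewrite in_setI in_setD1 allB x1L n1.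
  lia.
Qed.
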